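(* Let $D$ be a centrally finite division algebra and let $R=D[t_1,\ldots,t_n]$ be the ring of polynomials in $n$ central commuting variables over $D$. Then for every finite subset $A$ of $R$, the subring $S=D[A]$ of $R$ generated by $D\cup A$ is centrally normalizable over $D$.
   Context: All rings are associative with unity. A division algebra is centrally finite if it is finite-dimensional over its center. A ring $S$ containing $D$ is finite over a subring $R'$ if $S$ is finitely generated as a left $R'$-module. Commuting elements $a_1,\ldots,a_m\in S$ are (left) algebraically independent over $D$ if the monomials $a_1^{i_1}\cdots a_m^{i_m}$ are left linearly independent over $D$. $S$ is centrally normalizable over $D$ if there exist $m\ge0$ and commuting elements $a_1,\ldots,a_m\in S$ with $a_ib=ba_i$ for all $b\in D$, which are left algebraically independent over $D$, and such that $S$ is finite over the subring $D[a_1,\ldots,a_m]$ generated by $D\cup\{a_1,\ldots,a_m\}$. *)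

(* Defs.v *)
From HB Require Import structures.
From mathcomp Require Import all_boot all_algebra.
From mathcomp Require Import mpoly.
Set Implicit Arguments. Unset Strict Implicit. Unset Printing Implicit Defensive.
Import GRing.Theory.
Local Open Scope ring_scope.

Definition central (R : ringType) (x : R) : Prop := forall y : R, x * y = y * x.

Definition division_ring (D : unitRingType) : Prop :=
  forall x : D, x != 0 -> x \is a GRing.unit.

(* D is finite-dimensional over its center Z(D): finitely many elements span D
   as a (left) Z(D)-vector space *)
Definition centrally_finite (D : unitRingType) : Prop :=
  exists s : seq D, forall x : D,
    exists c : 'I_(size s) -> D, (forall i, central (c i)) /\
      x = \sum_(i < size s) c i * s`_i.

Inductive gen_subring (R : ringType) (X : R -> Prop) : R -> Prop :=
| gs_gen x : X x -> gen_subring X x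
| gs_one : gen_subring X 1
| gs_add x y : gen_subring X x -> gen_subring X y -> gen_subring X (x + y)
| gs_opp x : gen_subring X x -> gen_subring X (- x)
| gs_mul x y : gen_subring X x -> gen_subring X y -> gen_subring X (x * y).

Definition DAdj (D : ringType) (n : nat) (X : {mpoly D[n]} -> Prop) :
  {mpoly D[n]} -> Prop :=
  gen_subring (fun x => (exists d : D, x = d%:MP) \/ X x).

(* S is finite over the subring R' : S is finitely generated as a left R'-module *)
Definition finite_over (R : ringType) (S R' : R -> Prop) : Prop :=
  exists s : seq R, (forall x, x \in s -> S x) /\
    forall x, S x -> exists r : 'I_(size s) -> R,
      (forall i, R' (r i)) /\ x = \sum_(i < size s) r i * s`_i.

Definition monom (R : ringType) (m : nat) (a : 'I_m -> R) (e : 'X_{1..m}) : R :=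
  \prod_(i < m) a i ^+ e i.

Definition alg_indep (D : ringType) (n m : nat) (a : 'I_m -> {mpoly D[n]}) : Prop :=
  forall (s : seq 'X_{1..m}) (c : 'X_{1..m} -> D), uniq s ->
    \sum_(e <- s) (c e)%:MP * monom a e = 0 -> forall e, e \in s -> c e = 0.

Definition centrally_normalizable (D : ringType) (n : nat)
  (S : {mpoly D[n]} -> Prop) : Prop :=
  exists (m : nat) (a : 'I_m -> {mpoly D[n]}),
    [/\ forall i, S (a i),
        forall i j, a i * a j = a j * a i,
        forall i (b : D), a i * b%:MP = b%:MP * a i,
        alg_indep a &
        finite_over S (DAdj (fun x => exists i, x = a i))].

(* Main.v *)
Require Import Defs.
From HB Require Import structures.
From mathcomp Require Import all_boot all_algebra.
From mathcomp Require Import mpoly.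
From Stdlib Require Import Classical.
Set Implicit Arguments. Unset Strict Implicit. Unset Printing Implicit Defensive.
Import GRing.Theory.
Local Open Scope ring_scope.

Section Central.
Variable T : ringType.
Lemma central0 : central (0 : T). Proof. by move=> y; rewrite mul0r mulr0. Qed.
Lemma central1 : central (1 : T). Proof. by move=> y; rewrite mul1r mulr1. Qed.
Lemma centralD (x y : T) : central x -> central y -> central (x + y).
Proof. by move=> hx hy z; rewrite mulrDl mulrDr hx hy. Qed.
Lemma centralN (x : T) : central x -> central (- x).
Proof. by move=> hx z; rewrite mulNr mulrN hx. Qed.
Lemma centralB (x y : T) : central x -> central y -> central (x - y).
Proof. by move=> hx hy; apply: centralD => //; apply: centralN. Qed.
Lemma centralM (x y : T) : central x -> central y -> central (x * y).
Proof. by move=> hx hy z; rewrite -mulrA hy mulrA hx mulrA. Qed.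
Lemma centralX (x : T) k : central x -> central (x ^+ k).
Proof.
move=> hx; elim: k => [|k IH]; first by rewrite expr0; apply: central1.
by rewrite exprS; apply: centralM.
Qed.
End Central.

Section P.
Variable (D : unitRingType) (n : nat).
Local Notation R := {mpoly D[n]}.

Lemma C_central (c : D) : central c -> central (c%:MP : R).
Proof.
move=> hc q; rewrite (mpolyE q) big_distrr big_distrl /=.
apply: eq_bigr => m _; rewrite -!mul_mpolyC.
rewrite mulrA -mpolyCM hc mpolyCM -!mulrA; congr (_ * _).
exact: commr_mpolyX.
Qed.

Definition Zt (p : R) := forall m, central (p@_m).

Lemma Zt_central p : Zt p -> central p.
Proof.
move=> hp q; rewrite (mpolyE p) big_distrr big_distrl /=.
apply: eq_bigr => m _; rewrite -!mul_mpolyC.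
rewrite -mulrA -(commr_mpolyX m q) mulrA (C_central (hp m)) -mulrA //.
Qed.
End P.

Lemma zmod_helper (V : zmodType) (w A B C Y : V) :
  w + (A + (B + C)) = w + (B + Y) + (A + (C - Y)).
Proof.
rewrite -addrA; congr (_ + _).
rewrite (addrC C (-Y)) !addrA (addrAC B Y A) addrK (addrC A B) //.
Qed.

Section Bimod.
Variable (D : unitRingType) (n : nat).
Local Notation R := {mpoly D[n]}.
Hypothesis hdiv : division_ring D.
Variable S : R -> Prop.
Hypothesis SC : forall d : D, S d%:MP.
Hypothesis SD : forall x y, S x -> S y -> S (x + y).
Hypothesis SN : forall x, S x -> S (- x).
Hypothesis SM : forall x y, S x -> S y -> S (x * y).

Lemma SB x y : S x -> S y -> S (x - y).
Proof. by move=> hx hy; apply: SD => //; apply: SN. Qed.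

Inductive DW : R -> Prop :=
| DW0 : DW 0
| DWS (d : D) w x : S w -> Zt w -> DW x -> DW (d%:MP * w + x).

Lemma DW_S x : DW x -> S x.
Proof. by elim=> [|d w y hw _ _ hy]; [rewrite -(mpolyC0 n D); apply: SC | apply: SD => //; apply: SM]. Qed.

Lemma DW_add x y : DW x -> DW y -> DW (x + y).
Proof. by elim=> [|d w z hw hz _ IH] hy; [rewrite add0r | rewrite -addrA; constructor => //; apply: IH]. Qed.

Lemma DW_opp x : DW x -> DW (- x).
Proof.
elim=> [|d w z hw hz _ IH]; first by rewrite oppr0; constructor.
by rewrite opprD -mulNr -mpolyCN; constructor.
Qed.

Lemma DW_Cl (a : D) x : DW x -> DW (a%:MP * x).
Proof.
elim=> [|d w z hw hz _ IH]; first by rewrite mulr0; constructor.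
by rewrite mulrDr mulrA -mpolyCM; constructor.
Qed.

Lemma DW_Cr (a : D) x : DW x -> DW (x * a%:MP).
Proof.
elim=> [|d w z hw hz _ IH]; first by rewrite mul0r; constructor.
by rewrite mulrDl -mulrA (Zt_central hz a%:MP) mulrA -mpolyCM; constructor.
Qed.

Lemma DW_gen w : S w -> Zt w -> DW w.
Proof. by move=> hw hz; rewrite -[w]addr0 -[w]mul1r -mpolyC1; constructor => //; constructor. Qed.

Definition Sm (f : D * R -> D) (l : seq (D * R)) : R :=
  \sum_(q <- l) (f q)%:MP * q.2.

Lemma Sm_l a f l : a%:MP * Sm f l = Sm (fun q => a * f q) l.
Proof. by rewrite /Sm big_distrr /=; apply: eq_bigr => q _; rewrite mulrA -mpolyCM. Qed.

Lemma Sm_r a f l : (forall q, q \in l -> Zt q.2) ->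
  Sm f l * a%:MP = Sm (fun q => f q * a) l.
Proof.
move=> hl; rewrite /Sm big_distrl /= big_seq [RHS]big_seq; apply: eq_bigr => q hq.
by rewrite -mulrA (Zt_central (hl q hq) a%:MP) mulrA -mpolyCM.
Qed.

Lemma Sm_add f g l : Sm f l + Sm g l = Sm (fun q => f q + g q) l.
Proof. by rewrite /Sm -big_split; apply: eq_bigr => q _; rewrite mpolyCD mulrDl. Qed.

Lemma Sm_opp f l : - Sm f l = Sm (fun q => - f q) l.
Proof. by rewrite /Sm -sumrN; apply: eq_bigr => q _; rewrite mpolyCN mulNr. Qed.

Lemma Sm_ext f g l : (forall q, q \in l -> f q = g q) -> Sm f l = Sm g l.
Proof. by move=> h; rewrite /Sm big_seq [RHS]big_seq; apply: eq_bigr => q /h ->. Qed.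

Lemma Sm_cons f q l : Sm f (q :: l) = (f q)%:MP * q.2 + Sm f l.
Proof. by rewrite /Sm big_cons. Qed.

Lemma Sm_map f g l : Sm f [seq (g q, q.2) | q <- l] = Sm (fun q => f (g q, q.2)) l.
Proof. by rewrite /Sm big_map. Qed.

Lemma Sm_perm f l l' : perm_eq l l' -> Sm f l = Sm f l'.
Proof. by move=> h; rewrite /Sm (perm_big _ h). Qed.

Lemma Zt_Sm f l : (forall q, q \in l -> central (f q)) -> (forall q, q \in l -> Zt q.2) ->
  Zt (Sm f l).
Proof.
move=> hf hl m; rewrite /Sm raddf_sum /= big_seq.
apply: (big_ind (fun x => central x)); [exact: central0 | exact: centralD|].
move=> q hq; rewrite mcoeffCM; apply: centralM; [exact: hf | exact: hl].
Qed.

Lemma key k : forall (l : seq (D * R)), (size l <= k)%N ->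
  (forall q, q \in l -> Zt q.2) ->
  forall x w, S x -> DW w -> x = w + Sm (fun q => q.1) l -> DW x.
Proof.
elim: k => [|k IH] [|[d0 v0] ls] //=.
- by move=> _ _ x w _ hw ->; rewrite /Sm big_nil addr0.
- by move=> _ _ x w _ hw ->; rewrite /Sm big_nil addr0.
rewrite ltnS => hsz hl x w hx hw ex.
have hls : forall q, q \in ls -> Zt q.2 by move=> q hq; apply: hl; rewrite inE hq orbT.
have [d00|d0n0] := eqVneq d0 0.
  apply: (IH ls hsz hls x w hx hw); rewrite ex Sm_cons /= d00 mpolyC0 mul0r add0r //.
have ud0 : d0 \is a GRing.unit by apply: hdiv.
set l := (d0, v0) :: ls.
case: (classic (forall q, q \in l -> central (d0^-1 * q.1))) => [hc|hnc].
  pose u := Sm (fun q => d0^-1 * q.1) l.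
  have Zu : Zt u by apply: Zt_Sm.
  have Su : S u.
    have -> : u = (d0^-1)%:MP * x - (d0^-1)%:MP * w.
      by rewrite ex mulrDr Sm_l addrC addKr.
    by apply: SB; apply: SM => //; apply: DW_S.
  have -> : x = d0%:MP * ((d0^-1)%:MP * w + u).
    by rewrite /u -Sm_l -mulrDr mulrA -mpolyCM mulrV // mpolyC1 mul1r.
  by apply: DW_Cl; apply: DW_add; [apply: DW_Cl | apply: DW_gen].
have [q hq] : exists q, q \in l /\ ~ central (d0^-1 * q.1).
  apply: NNPP => hn; apply: hnc => q hq; apply: NNPP => hq'; apply: hn; exists q; split => //.
case: hq => hql hqc.
have [d hd] : exists d, d0^-1 * q.1 * d <> d * (d0^-1 * q.1).
  by apply: NNPP => hn; apply: hqc => y; apply: NNPP => hy; apply: hn; exists y.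
have qls : q \in ls.
  move: hql; rewrite inE => /orP [/eqP eq|//]; case: hd; rewrite eq /= mulVr //.
  by rewrite mul1r mulr1.
pose cf := fun r : D * R => d * (d0^-1 * r.1) - (d0^-1 * r.1) * d.
have Dz : DW (Sm cf ls).
  pose y := (d * d0^-1)%:MP * x - (d0^-1)%:MP * x * d%:MP.
  pose w2 := (d * d0^-1)%:MP * w - (d0^-1)%:MP * w * d%:MP.
  have Dw2 : DW w2 by apply: DW_add; [apply: DW_Cl | apply: DW_opp; apply: DW_Cr; apply: DW_Cl].
  have ey : y = w2 + Sm cf ls.
    rewrite /y /w2 ex !mulrDr mulrDl !Sm_l Sm_r; last first.
      by move=> r; rewrite /l => hr; apply: hl.
    rewrite opprD addrACA; congr (_ + _).
    rewrite Sm_opp Sm_add Sm_cons /= /cf.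
    rewrite divrK // mulVr // mul1r subrr mpolyC0 mul0r add0r.
    by apply: Sm_ext => r _; rewrite mulrA.
  have Sy : S y by apply: SB; [apply: SM | apply: SM; [apply: SM|]].
  have hmap : forall r, r \in [seq (cf r, r.2) | r <- ls] -> Zt r.2.
    move=> r /mapP [r' hr' ->] /=. exact: hls.
  have := IH _ _ hmap (Sm cf ls) 0 _ DW0.
  rewrite size_map Sm_map /= => H; apply: H => //.
    have -> : Sm cf ls = y - w2 by rewrite ey addrAC subrr add0r.
    by apply: SB => //; apply: DW_S.
  by rewrite add0r.
(* now eliminate q.2 *)
have pls := perm_to_rem qls.
set c := cf q.
have cn0 : c != 0.
  apply/eqP => c0; apply: hd; apply/eqP; rewrite eq_sym -subr_eq0; apply/eqP; exact: c0.
have uc : c \is a GRing.unit by apply: hdiv.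
set z := Sm cf ls.
pose l2 := (d0, v0) :: [seq (r.1 - q.1 * c^-1 * cf r, r.2) | r <- rem q ls].
have hl2 : forall r, r \in l2 -> Zt r.2.
  move=> r; rewrite inE => /orP [/eqP ->|]; first by apply: hl; rewrite inE eqxx.
  move=> /mapP [r' hr' ->] /=; apply: hls; exact: (mem_rem hr').
have sl2 : (size l2 <= k)%N.
  have lp : (0 < size ls)%N by move: qls; case: (ls).
  by rewrite /= size_map size_rem // prednK.
apply: (IH l2 sl2 hl2 x (w + (q.1 * c^-1)%:MP * z) hx).
  by apply: DW_add => //; apply: DW_Cl.
rewrite ex /l2 !Sm_cons Sm_map /= (Sm_perm _ pls) Sm_cons /z (Sm_perm _ pls) Sm_cons.
rewrite mulrDr Sm_l mulrA -mpolyCM /c divrK //.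
have -> : Sm (fun q0 : D * R => q0.1 - q.1 / cf q * cf q0) (rem q ls) =
  Sm (fun q0 => q0.1) (rem q ls) - Sm (fun q0 => q.1 / cf q * cf q0) (rem q ls).
  by rewrite Sm_opp Sm_add.
exact: zmod_helper.
Qed.
End Bimod.

Lemma gen_mono (T : ringType) (X Y : T -> Prop) x :
  (forall y, X y -> Y y) -> gen_subring X x -> gen_subring Y x.
Proof.
move=> h; elim=> [y hy||y z _ IH1 _ IH2|y _ IH|y z _ IH1 _ IH2].
- by apply: gs_gen; apply: h.
- exact: gs_one.
- exact: gs_add.
- exact: gs_opp.
- exact: gs_mul.
Qed.

Lemma gen0 (T : ringType) (X : T -> Prop) : gen_subring X 0.
Proof. by rewrite -(subrr (1 : T)); apply: gs_add; [|apply: gs_opp]; constructor. Qed.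

Lemma gen_sub (T : ringType) (X : T -> Prop) x y :
  gen_subring X x -> gen_subring X y -> gen_subring X (x - y).
Proof. by move=> hx hy; apply: gs_add => //; apply: gs_opp. Qed.

Lemma gen_sum (T : ringType) (X : T -> Prop) (I : eqType) (r : seq I) (F : I -> T) :
  (forall i, i \in r -> gen_subring X (F i)) -> gen_subring X (\sum_(i <- r) F i).
Proof.
move=> h; rewrite big_seq; apply: (big_ind (gen_subring X)) => //.
  exact: gen0.
by move=> ???; apply: gs_add.
Qed.

Lemma gen_prod (T : ringType) (X : T -> Prop) (I : eqType) (r : seq I) (F : I -> T) :
  (forall i, i \in r -> gen_subring X (F i)) -> gen_subring X (\prod_(i <- r) F i).
Proof.
move=> h; rewrite big_seq; apply: (big_ind (gen_subring X)) => //.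
  exact: gs_one.
by move=> ???; apply: gs_mul.
Qed.

Lemma gen_exp (T : ringType) (X : T -> Prop) x k :
  gen_subring X x -> gen_subring X (x ^+ k).
Proof.
move=> h; elim: k => [|k IH]; first by rewrite expr0; apply: gs_one.
by rewrite exprS; apply: gs_mul.
Qed.

Section Gather.
Variable (D : unitRingType) (n : nat).
Local Notation R := {mpoly D[n]}.
Hypothesis hdiv : division_ring D.
Hypothesis hcf : centrally_finite D.

Lemma init_rep (x : R) : exists l : seq (D * R),
  (forall q, q \in l -> Zt q.2) /\ x = Sm (fun q => q.1) l.
Proof.
have : forall r : seq 'X_{1..n}, exists l : seq (D * R),
  (forall q, q \in l -> Zt q.2) /\ \sum_(m <- r) x@_m *: 'X_[m] = Sm (fun q => q.1) l.
  elim=> [|m r [l [hl el]]].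
    by exists [::]; split => //; rewrite big_nil /Sm big_nil.
  have [s hs] := hcf; have [c [hc ec]] := hs (x@_m).
  exists ([seq (s`_i, (c i)%:MP * 'X_[m]) | i : 'I_(size s) <- enum 'I_(size s)] ++ l); split.
    move=> q; rewrite mem_cat => /orP [/mapP [i _ ->]|]; last exact: hl.
    move=> m' /=; rewrite mcoeffCM mcoeffX; apply: centralM; first exact: hc.
    by case: (m == m'); [apply: central1 | apply: central0].
  rewrite big_cons el /Sm big_cat /= big_map; congr (_ + _).
  rewrite ec -mul_mpolyC raddf_sum /= big_distrl /= big_enum /=.
  apply: eq_bigr => i _; rewrite mulrA -mpolyCM (hc i).
  done.
move=> /(_ (msupp x)) [l [hl el]]; exists l; split => //; rewrite -el; exact: mpolyE.
Qed.

Variable S : R -> Prop.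
Hypothesis SC : forall d : D, S d%:MP.
Hypothesis SD : forall x y, S x -> S y -> S (x + y).
Hypothesis SN : forall x, S x -> S (- x).
Hypothesis SM : forall x y, S x -> S y -> S (x * y).

Lemma all_DW x : S x -> DW S x.
Proof.
move=> hx; have [l [hl el]] := init_rep x.
apply: (key hdiv SC SD SN SM (leqnn (size l)) hl hx (DW0 S)).
by rewrite add0r.
Qed.

Lemma DW_gather x : DW S x -> exists B : seq R, (forall b, b \in B -> S b /\ Zt b) /\
  gen_subring (fun y => (exists d : D, y = d%:MP) \/ y \in B) x.
Proof.
elim=> [|d w y hw hz _ [B [hB gy]]].
  by exists [::]; split => //; apply: gen0.
exists (w :: B); split.
  by move=> b; rewrite inE => /orP [/eqP ->|/hB].
apply: gs_add; last by apply: gen_mono gy => z [?|hz']; [left|right; rewrite inE hz' orbT].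
apply: gs_mul; constructor; [left; by exists d | right; by rewrite inE eqxx].
Qed.

Lemma gather (A : seq R) : (forall a, a \in A -> S a) ->
  exists B : seq R, (forall b, b \in B -> S b /\ Zt b) /\
  forall a, a \in A -> gen_subring (fun y => (exists d : D, y = d%:MP) \/ y \in B) a.
Proof.
elim: A => [|a A IH] hA; first by exists [::].
have [B [hB gB]] : exists B : seq R, (forall b, b \in B -> S b /\ Zt b) /\
  forall a, a \in A -> gen_subring (fun y => (exists d : D, y = d%:MP) \/ y \in B) a.
  by apply: IH => y hy; apply: hA; rewrite inE hy orbT.
have [B' [hB' gB']] := DW_gather (all_DW (hA a (mem_head _ _))).
exists (B' ++ B); split.
  by move=> b; rewrite mem_cat => /orP [/hB'|/hB].
move=> y; rewrite inE => /orP [/eqP ->|hy].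
  by apply: gen_mono gB' => z [?|hz]; [left|right; rewrite mem_cat hz].
by apply: gen_mono (gB y hy) => z [?|hz]; [left|right; rewrite mem_cat hz orbT].
Qed.
End Gather.

Section SpanSec.
Variable T : nzRingType.

Inductive Span (H : T -> Prop) (s : seq T) : T -> Prop :=
| Sp0 : Span H s 0
| SpS h v x : H h -> v \in s -> Span H s x -> Span H s (h * v + x).

Lemma Span_add H s x y : Span H s x -> Span H s y -> Span H s (x + y).
Proof.
elim=> [|h v z hh hv _ IH] hy; first by rewrite add0r.
by rewrite -addrA; constructor => //; apply: IH.
Qed.

Lemma Span_lmul H s h x : (forall a b, H a -> H b -> H (a * b)) ->
  H h -> Span H s x -> Span H s (h * x).
Proof.
move=> HM hh; elim=> [|h' v z hh' hv _ IH]; first by rewrite mulr0; constructor.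
by rewrite mulrDr mulrA; constructor => //; apply: HM.
Qed.

Lemma Span_opp H s x : (forall a, H a -> H (- a)) -> Span H s x -> Span H s (- x).
Proof.
move=> HN; elim=> [|h v z hh hv _ IH]; first by rewrite oppr0; constructor.
by rewrite opprD -mulNr; constructor => //; apply: HN.
Qed.

Lemma Span_trans H K s u x : (forall h, H h -> Span K u h) ->
  Span H s x -> Span K [seq a * b | a <- u, b <- s] x.
Proof.
move=> hHK; elim=> [|h v z hh hv _ IH]; first by constructor.
apply: Span_add => //.
elim: (hHK h hh) => [|k w t hk hw _ IH']; first by rewrite mul0r; constructor.
rewrite mulrDl -mulrA; constructor => //.
by apply/allpairsP; exists (w, v).
Qed.

Lemma Span_sum H s x : H 0 -> (forall a b, H a -> H b -> H (a + b)) ->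
  Span H s x -> exists r : 'I_(size s) -> T,
    (forall i, H (r i)) /\ x = \sum_(i < size s) r i * s`_i.
Proof.
move=> H0 HD; elim=> [|h v z hh hv _ [r [hr ->]]].
  by exists (fun _ => 0); split => //; rewrite big1 // => i _; rewrite mul0r.
have vs : (index v s < size s)%N by rewrite index_mem.
pose j := Ordinal vs.
exists (fun i => r i + (if i == j then h else 0)); split.
  by move=> i; apply: HD => //; case: (i == j).
rewrite (bigD1 j) //= [X in _ = X](bigD1 j) //= eqxx nth_index //.
rewrite mulrDl addrCA addrA; congr (_ + _).
apply: eq_bigr => i /negbTE ->; by rewrite addr0.
Qed.
End SpanSec.

Lemma exists_max (T : eqType) (f : T -> nat) (l : seq T) :
  l != [::] -> exists2 x, x \in l & forall y, y \in l -> (f y <= f x)%N.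
Proof.
elim: l => [|a l IH] // _.
case: (eqVneq l [::]) => [->|ln].
  by exists a; rewrite ?mem_head // => y; rewrite inE => /eqP ->.
have [x xl hx] := IH ln.
case: (leqP (f a) (f x)) => ha.
  exists x; first by rewrite inE xl orbT.
  by move=> y; rewrite inE => /orP [/eqP ->|/hx].
exists a; first by rewrite mem_head.
move=> y; rewrite inE => /orP [/eqP ->//|/hx hy].
by apply: leq_trans hy (ltnW ha).
Qed.

Lemma digits_eq (N : nat) a1 a2 X1 X2 : (a1 < N)%N -> (a2 < N)%N ->
  (a1 + N * X1 = a2 + N * X2)%N -> a1 = a2 /\ X1 = X2.
Proof.
move=> h1 h2 e.
have N0 : (0 < N)%N by apply: leq_ltn_trans h1.
have e1 : a1 = a2.
  have := congr1 (fun t => t %% N)%N e => /=.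
  by rewrite ![(_ + N * _)%N]addnC ![(N * _)%N]mulnC !modnMDl !modn_small.
split => //.
have := congr1 (fun t => t %/ N)%N e => /=.
by rewrite ![(_ + N * _)%N]addnC ![(N * _)%N]mulnC !divnMDl // !divn_small // !addn0.
Qed.

Lemma digits_inj (N : nat) k (f g : 'I_k -> nat) :
  (forall i, f i < N)%N -> (forall i, g i < N)%N ->
  (\sum_(i < k) f i * N ^ i = \sum_(i < k) g i * N ^ i)%N -> forall i, f i = g i.
Proof.
elim: k f g => [|k IH] f g hf hg; first by move=> _ [].
rewrite !big_ord_recl /= !expn0 !muln1.
have E : forall h : 'I_k.+1 -> nat,
  (\sum_(i < k) h (lift ord0 i) * N ^ bump 0 i = N * \sum_(i < k) h (lift ord0 i) * N ^ i)%N.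
  move=> h; rewrite big_distrr /=; apply: eq_bigr => i _.
  by rewrite /bump /= add1n expnS mulnCA.
rewrite !E => e.
have [e0 e1] := digits_eq (hf ord0) (hg ord0) e.
have h' := IH (fun i => f (lift ord0 i)) (fun i => g (lift ord0 i))
  (fun i => hf _) (fun i => hg _) e1.
move=> i; case: (unliftP ord0 i) => [j ->|->] //.
Qed.

Section PolyOver.
Variable T : nzRingType.
Variable X : T -> Prop.
Local Notation H := (gen_subring X).
Definition PO (p : {poly T}) := forall j, H p`_j.

Lemma PO_add p q : PO p -> PO q -> PO (p + q).
Proof. by move=> hp hq j; rewrite coefD; apply: gs_add. Qed.

Lemma PO_mul p q : PO p -> PO q -> PO (p * q).
Proof.
move=> hp hq j; rewrite coefM; apply: gen_sum => i _; exact: gs_mul.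
Qed.

Lemma PO_C c : H c -> PO c%:P.
Proof. by move=> hc j; rewrite coefC; case: (j == 0)%N => //; apply: gen0. Qed.

Lemma PO_Xn k : PO 'X^k.
Proof. by move=> j; rewrite coefXn; case: (j == k) => /=; [apply: gs_one | apply: gen0]. Qed.

Lemma PO_1 : PO 1.
Proof. by rewrite -polyC1; apply: PO_C; apply: gs_one. Qed.

Lemma PO_exp p k : PO p -> PO (p ^+ k).
Proof.
move=> hp; elim: k => [|k IH]; first by rewrite expr0; apply: PO_1.
by rewrite exprS; apply: PO_mul.
Qed.

Lemma PO_prod (I : eqType) (r : seq I) (F : I -> {poly T}) :
  (forall i, i \in r -> PO (F i)) -> PO (\prod_(i <- r) F i).
Proof.
move=> h; rewrite big_seq; apply: (big_ind PO) => //; [exact: PO_1 | exact: PO_mul].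
Qed.

Lemma PO_sum (I : eqType) (r : seq I) (F : I -> {poly T}) :
  (forall i, i \in r -> PO (F i)) -> PO (\sum_(i <- r) F i).
Proof.
move=> h; rewrite big_seq; apply: (big_ind PO) => //; last exact: PO_add.
by apply: PO_C; apply: gen0.
Qed.

Lemma horner_prod_central (I : Type) (r : seq I) (F : I -> {poly T}) (y : T) :
  central y -> (\prod_(i <- r) F i).[y] = \prod_(i <- r) (F i).[y].
Proof.
move=> hy; elim: r => [|i r IH]; first by rewrite !big_nil hornerC.
by rewrite !big_cons hornerM_comm ?IH //; rewrite /comm_poly hy.
Qed.
End PolyOver.

Lemma gen_subgen (T : nzRingType) (X Y : T -> Prop) x :
  (forall y, X y -> gen_subring Y y) -> gen_subring X x -> gen_subring Y x.
Proof.
move=> h; elim=> [y hy||y z _ IH1 _ IH2|y _ IH|y z _ IH1 _ IH2].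
- exact: h.
- exact: gs_one.
- exact: gs_add.
- exact: gs_opp.
- exact: gs_mul.
Qed.

Lemma monic_size_exp (T : nzRingType) (p : {poly T}) k : p \is monic ->
  size (p ^+ k) = ((size p).-1 * k).+1.
Proof.
move=> mp; elim: k => [|k IH]; first by rewrite expr0 size_poly1 muln0.
have sp : (0 < size p)%N by rewrite size_poly_gt0 monic_neq0.
rewrite exprS size_monicM // ?monic_neq0 ?monic_exp // IH mulnS addnS /=.
by rewrite -{1}(prednK sp) addSn.
Qed.

Lemma monic_size_prod (T : nzRingType) (I : Type) (r : seq I) (F : I -> {poly T}) :
  (forall i, F i \is monic) ->
  size (\prod_(i <- r) F i) = (\sum_(i <- r) (size (F i)).-1).+1.
Proof.
move=> mF; elim: r => [|i r IH]; first by rewrite !big_nil size_poly1.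
have sp : (0 < size (F i))%N by rewrite size_poly_gt0 monic_neq0.
rewrite !big_cons size_monicM // ?monic_neq0 ?monic_prod // IH addnS /=.
by rewrite -{1}(prednK sp) addSn.
Qed.

Section Noether.
Variable (D : unitRingType) (n : nat).
Local Notation R := {mpoly D[n]}.
Hypothesis hdiv : division_ring D.

Definition G k (b : 'I_k -> R) : R -> Prop := DAdj (fun x => exists i, x = b i).

Lemma G_C k (b : 'I_k -> R) d : G b d%:MP.
Proof. by apply: gs_gen; left; exists d. Qed.

Lemma G_b k (b : 'I_k -> R) i : G b (b i).
Proof. by apply: gs_gen; right; exists i. Qed.

Lemma alg_indep0 (b : 'I_0 -> R) : alg_indep b.
Proof.
move=> s c; case: s => [|e0 [|e1 s]] //=.
  move=> _; rewrite big_cons big_nil addr0 /monom big_ord0 mulr1 => /eqP.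
  by rewrite mpolyC_eq0 => /eqP c0 e; rewrite inE => /eqP ->.
have -> : e0 = e1 by apply/mnmP => -[].
by rewrite inE eqxx.
Qed.

Definition NNconcl k (b : 'I_k -> R) :=
  exists m (a : 'I_m -> R) (s : seq R),
    [/\ forall i, G b (a i), forall i, central (a i), alg_indep a,
        forall v, v \in s -> G b v & forall x, G b x -> Span (G a) s x].

Lemma NN_indep k (b : 'I_k -> R) : (forall i, central (b i)) -> alg_indep b -> NNconcl b.
Proof.
move=> hb hi; exists k, b, [:: 1]; split => //.
- by move=> i; apply: G_b.
- by move=> v; rewrite inE => /eqP ->; apply: gs_one.
- by move=> x hx; rewrite -[x]addr0 -[x]mulr1; constructor; rewrite ?mem_head //; constructor.
Qed.
End Noether.

Section Nagata.
Variable (D : unitRingType) (n : nat).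
Local Notation R := {mpoly D[n]}.
Hypothesis hdiv : division_ring D.

Lemma nagata k (b : 'I_k.+1 -> R) (hb : forall i, central (b i))
  (IHk : forall b' : 'I_k -> R, (forall i, central (b' i)) -> NNconcl b')
  (s : seq 'X_{1..k.+1}) (c : 'X_{1..k.+1} -> D) (us : uniq s)
  (es : \sum_(e <- s) (c e)%:MP * monom b e = 0)
  (e0 : 'X_{1..k.+1}) (e0s : e0 \in s) (ce0 : c e0 != 0) : NNconcl b.
Proof.
pose y := b ord0.
have yc : central y by apply: hb.
pose N := (\max_(e <- s) mdeg e)%N.+1.
have N0 : (0 < N)%N by [].
have hN : forall e, e \in s -> forall i, (e i < N)%N.
  move=> e es' i; rewrite ltnS; apply: (@leq_trans (mdeg e)).
    by rewrite mdegE (bigD1 i) //= leq_addr.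
  exact: (@leq_bigmax_seq _ s predT (fun e => mdeg e) e es' erefl).
pose z := fun i : 'I_k.+1 => b i - y ^+ (N ^ i).
pose z' := fun i : 'I_k => z (lift ord0 i).
have zc : forall i, central (z i).
  by move=> i; apply: centralB; [apply: hb | apply: centralX].
have z0 : z ord0 = 0 by rewrite /z expn0 expr1 subrr.
have zG : forall i, G z' (z i).
  move=> i; case: (unliftP ord0 i) => [j ->|->]; first by apply: G_b.
  by rewrite z0; apply: gen0.
pose phi := fun i : 'I_k.+1 => (z i)%:P + 'X^(N ^ i) : {poly R}.
have phim : forall i, phi i \is monic /\ size (phi i) = (N ^ i).+1.
  move=> i; rewrite /phi addrC; split; first by apply: monicXnaddC; rewrite expn_gt0 N0.
  by apply: size_XnaddC; rewrite expn_gt0 N0.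
pose q := fun e : 'X_{1..k.+1} => \prod_(i < k.+1) phi i ^+ e i.
pose wt := fun e : 'X_{1..k.+1} => (\sum_(i < k.+1) e i * N ^ i)%N.
have hq : forall e, q e \is monic /\ size (q e) = (wt e).+1.
  move=> e; split; first by apply: monic_prod => i _; apply: monic_exp; case: (phim i).
  rewrite /q monic_size_prod; last by move=> i; apply: monic_exp; case: (phim i).
  congr _.+1; apply: eq_bigr => i _.
  have [pm ps] := phim i.
  by rewrite monic_size_exp // ps /= mulnC.
pose Q := \sum_(e <- s) ((c e)%:MP)%:P * q e.
have hQy : Q.[y] = 0.
  rewrite -es /Q horner_sum; apply: eq_bigr => e _; rewrite hornerCM; congr (_ * _).
  rewrite /q horner_prod_central // /monom; apply: eq_bigr => i _.
  rewrite horner_exp_comm; last by rewrite /comm_poly yc.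
  by rewrite /phi hornerD hornerC hornerXn /z subrK.
pose X' := fun x : R => (exists d : D, x = d%:MP) \/ (exists i, x = z' i).
have hPO : PO X' Q.
  apply: PO_sum => e _; apply: PO_mul; first by apply: PO_C; apply: G_C.
  apply: PO_prod => i _; apply: PO_exp; apply: PO_add; last exact: PO_Xn.
  by apply: PO_C; apply: zG.
have fne : [seq e <- s | c e != 0] != [::].
  apply/eqP => h; have : e0 \in [seq e <- s | c e != 0] by rewrite mem_filter ce0.
  by rewrite h.
have [es0 ess hes] := exists_max wt fne.
move: ess; rewrite mem_filter => /andP [ces ess].
pose W := wt es0.
have hcoef : forall j, (W <= j)%N -> Q`_j = if j == W then (c es0)%:MP else 0.
  move=> j hj; rewrite /Q coef_sum (bigD1_seq es0) //= coefCM.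
  rewrite big1_seq; last first.
    move=> e /andP [ne es1]; rewrite coefCM.
    have [->|cne] := eqVneq (c e) 0; first by rewrite mpolyC0 mul0r.
    have le : (wt e <= W)%N by apply: hes; rewrite mem_filter cne.
    have neW : wt e != W.
      apply/eqP => eW; move/eqP: ne; apply; apply/mnmP => i.
      apply: (digits_inj (hN e es1) (hN es0 ess) eW).
    have [_ sq] := hq e.
    rewrite nth_default ?mulr0 // sq; apply: leq_trans hj; by rewrite ltn_neqAle neW.
  have [mq sq] := hq es0.
  case: eqP => [->|jn].
    by move/monicP: mq; rewrite lead_coefE sq /= => ->; rewrite mulr1 addr0.
  rewrite nth_default ?mulr0 ?addr0 // sq; rewrite ltn_neqAle hj andbT.
  by apply/eqP => e; apply: jn.
have ces0 : (c es0) \is a GRing.unit by apply: hdiv.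
pose h := fun j : nat => - ((c es0)^-1%:MP * Q`_j).
have hG : forall j, G z' (h j).
  by move=> j; apply: gs_opp; apply: gs_mul; [apply: G_C | apply: hPO].
have rel : y ^+ W = \sum_(j < W) h j * y ^+ j.
  have sQ : (size Q <= W.+1)%N.
    by apply/leq_sizeP => j hj; rewrite hcoef ?(ltnW hj) // gtn_eqF.
  move: hQy; rewrite (horner_coef_wide _ sQ) big_ord_recr /= hcoef // eqxx.
  move=> /(congr1 (fun t => (c es0)^-1%:MP * t)); rewrite mulr0 mulrDr.
  rewrite mulrA -mpolyCM mulVr // mpolyC1 mul1r => /eqP; rewrite addrC addr_eq0 => /eqP ->.
  rewrite big_distrr /= -sumrN; apply: eq_bigr => j _.
  by rewrite /h mulrA mulNr.
pose pw := [seq y ^+ i | i <- iota 0 W].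
pose T := Span (G z') pw.
have GM : forall a b, G z' a -> G z' b -> G z' (a * b) by move=> ? ?; apply: gs_mul.
have GN : forall a, G z' a -> G z' (- a) by move=> ?; apply: gs_opp.
have Tgen : forall g i, G z' g -> (i < W)%N -> T (g * y ^+ i).
  move=> g i hg hi; rewrite -[_ * _]addr0; constructor => //; last by constructor.
  by apply: map_f; rewrite mem_iota add0n leq0n.
have TW : T (y ^+ W).
  rewrite rel; apply: (big_ind T); [by constructor | exact: Span_add |].
  by move=> j _; apply: Tgen.
have Ty : forall x, T x -> T (x * y).
  move=> x; elim=> [|g v x' hg hv _ IH]; first by rewrite mul0r; constructor.
  rewrite mulrDl; apply: Span_add => //; rewrite -mulrA; apply: Span_lmul => //.
  move: hv => /mapP [i]; rewrite mem_iota add0n leq0n /= => hi ->; rewrite -exprSr.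
  case: (ltnP i.+1 W) => hi'.
    by rewrite -[y ^+ _]mul1r; apply: Tgen => //; apply: gs_one.
  have -> : i.+1 = W by apply/eqP; rewrite eqn_leq hi hi'.
  exact: TW.
have Tpow : forall j, T (y ^+ j).
  elim=> [|j IH]; last by rewrite exprSr; apply: Ty.
  case: (posnP W) => [W0|Wp].
    by move: TW; rewrite W0.
  by rewrite -[y ^+ 0]mul1r; apply: Tgen => //; apply: gs_one.
have Tmul : forall x t, T x -> T t -> T (x * t).
  move=> x t; elim=> [|g v x' hg hv _ IH] ht; first by rewrite mul0r; constructor.
  rewrite mulrDl; apply: Span_add; last exact: IH.
  rewrite -mulrA; apply: Span_lmul => //.
  move: hv => /mapP [i _ ->]; elim: ht => [|g' v' t' hg' hv' _ IH']; first by rewrite mulr0; constructor.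
  rewrite mulrDr; apply: Span_add => //.
  rewrite mulrA (centralX i yc g') -mulrA; apply: Span_lmul => //.
  by move: hv' => /mapP [j _ ->]; rewrite -exprD; apply: Tpow.
have T1 : T 1 by rewrite -(expr0 y); apply: Tpow.
have GbT : forall x, G b x -> T x.
  move=> x; elim=> [x0 [[d ->]|[i ->]]||x1 x2 _ IH1 _ IH2|x1 _ IH|x1 x2 _ IH1 _ IH2].
  - by rewrite -[_%:MP]mulr1; apply: Span_lmul => //; apply: G_C.
  - have -> : b i = z i * 1 + y ^+ (N ^ i) by rewrite mulr1 /z subrK.
    by apply: Span_add; [apply: Span_lmul | apply: Tpow].
  - exact: T1.
  - exact: Span_add.
  - exact: Span_opp.
  - exact: Tmul.
have z'c : forall i, central (z' i) by move=> i; apply: zc.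
have [m [a [s' [aG ac ai s'G hs']]]] := IHk z' z'c.
have Gz'b : forall x, G z' x -> G b x.
  move=> x; apply: gen_subgen => x0 [[d ->]|[i ->]]; first by apply: G_C.
  by apply: gen_sub; [apply: G_b | apply: gen_exp; apply: G_b].
exists m, a, [seq u * v | u <- s', v <- pw]; split => //.
- by move=> i; apply: Gz'b.
- move=> v /allpairsP [[u w] [/= hu hw ->]]; apply: gs_mul; first by apply: Gz'b; apply: s'G.
  by move: hw => /mapP [i _ ->]; apply: gen_exp; apply: G_b.
- by move=> x hx; apply: Span_trans (GbT x hx) => g hg; apply: hs'.
Qed.
End Nagata.

Section Final.
Variable (D : unitRingType) (n : nat).
Local Notation R := {mpoly D[n]}.
Hypothesis hdiv : division_ring D.

Lemma NN k : forall b : 'I_k -> R, (forall i, central (b i)) -> NNconcl b.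
Proof.
elim: k => [|k IH] b hb; first by apply: NN_indep => //; apply: alg_indep0.
case: (classic (alg_indep b)) => hi; first exact: NN_indep.
have [s [c [us [es [e0 [e0s ce0]]]]]] : exists s c, uniq s /\
    \sum_(e <- s) (c e)%:MP * monom b e = 0 /\ exists e, e \in s /\ c e != 0.
  apply: NNPP => hn; apply: hi => s c us es e e_in; apply: NNPP => hce; apply: hn.
  exists s, c; split => //; split => //; exists e; split => //; exact/eqP.
exact: (nagata hdiv hb IH us es e0s ce0).
Qed.
End Final.

Unset Implicit Arguments.
Theorem proposition4p6 (D : unitRingType) (n : nat)
  (hdiv : division_ring D) (hcf : centrally_finite D)
  (A : seq {mpoly D[n]}) :
  centrally_normalizable (DAdj (fun x => x \in A)).
Proof.
pose S := DAdj (fun x : {mpoly D[n]} => x \in A).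
have SC : forall d : D, S d%:MP by move=> d; apply: gs_gen; left; exists d.
have SD : forall x y, S x -> S y -> S (x + y) by move=> x y; apply: gs_add.
have SN : forall x, S x -> S (- x) by move=> x; apply: gs_opp.
have SM : forall x y, S x -> S y -> S (x * y) by move=> x y; apply: gs_mul.
have [B [hB gB]] := gather hdiv hcf SC SD SN SM (fun a ha => gs_gen (or_intror ha)).
pose bf := fun i : 'I_(size B) => B`_i.
have bc : forall i, central (bf i).
  by move=> i; apply: Zt_central; case: (hB _ (mem_nth 0 (ltn_ord i))).
have SG : forall x, S x -> G bf x.
  move=> x; apply: gen_subgen => y [[d ->]|hy]; first by apply: G_C.
  apply: gen_subgen (gB y hy) => t [[d ->]|ht]; first by apply: G_C.
  have ti : (index t B < size B)%N by rewrite index_mem.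
  by rewrite -(nth_index 0 ht); apply: (G_b bf (Ordinal ti)).
have GS : forall x, G bf x -> S x.
  move=> x; apply: gen_subgen => y [[d ->]|[i ->]]; first by apply: SC.
  by case: (hB _ (mem_nth 0 (ltn_ord i))).
have [m [a [s' [aG ac ai s'G hs']]]] := NN hdiv bc.
exists m, a; split => //.
- by move=> i; apply: GS.
- by move=> i j; apply: ac.
- by move=> i b; apply: ac.
- exists s'; split; first by move=> v /s'G; apply: GS.
  move=> x /SG /hs' sp; apply: (Span_sum _ _ sp); first exact: gen0.
  by move=> ? ?; apply: gs_add.
Qed.
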